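(* Let $\mathfrak{B}$ be a linear time-invariant behavior with signal space $\mathbb{R}^{\mathrm{w}}$ whose restriction to the interval $[k-L^-,k+L^+]$ (with $L^-+L^++1=L$) is represented as $\hat{w}_{[k-L^-,k+L^+]}=\mathcal{F} z_k$ for a matrix $\mathcal{F}$ and arbitrary vector $z_k$. Let $\mathfrak{B}_{sV}$ be the dissipative behavior with manifest variable $(s,V)$ described by $V(k)-V(k-1)\leq s(k)$ for all $k$, with $V\geq 0$, and let the interconnection between $\mathfrak{B}$ and $\mathfrak{B}_{sV}$ be given by the quadratic difference forms $s(k)=Q_\Phi(w)(k)$, $V(k)=Q_\Psi(w)(k)$ of orders $K_\Phi$ and $K_\Psi$ with symmetric coefficient matrices $\widetilde{\Phi}$ and $\widetilde{\Psi}$. Assume that $L^-=\max\{K_\Phi,K_\Psi+1\}$. If $L^->\mathtt{L}(\mathfrak{B})$ (the lag of $\mathfrak{B}$), $\widetilde{\Psi}\geq0$ and, for all $l\in\{0,1,\ldots,L^+\}$, $$z_k^\top\mathcal{F}_l^\top (\widehat{\Phi}-\nabla\widehat{\Psi})\mathcal{F}_lz_k\geq0$$ holds for any $z_k$, where $\mathcal{F}_l$ denotes the sub-matrix of $\mathcal{F}$ corresponding to the trajectory segment $\hat{w}_{[k-L^-+l,k+l]}$, then $\mathfrak{B}=\pi_{w}(\mathfrak{B}_{ps})$, where $\mathfrak{B}_{ps}=(\mathfrak{B}\times\mathfrak{B}_{sV})\cap\mathfrak{B}_{s}^\Pi$. In other words, $\mathfrak{B}$ is $(Q_\Phi(w),Q_\Psi(w))$-dissipative.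 Furthermore, if $L^+=0$, then the family of inequalities $z_k^\top\mathcal{F}_l^\top (\widehat{\Phi}-\nabla\widehat{\Psi})\mathcal{F}_lz_k\geq0$ reduces to the single linear matrix inequality $$\mathcal{F}^\top (\widehat{\Phi}-\nabla\widehat{\Psi})\mathcal{F}\geq0.$$
   Context: Discrete time axis $\mathbb{T}\subset\mathbb{Z}^{\geq0}$. A dynamical system is a triple $(\mathbb{T},\mathbb{W},\mathfrak{B})$ with behavior $\mathfrak{B}\subset\mathbb{W}^{\mathbb{T}}$; $\hat{w}_{[a,b]}=\mathrm{col}(w(a),\ldots,w(b))$ and $\mathfrak{B}_{|[a,b]}$ is the behavior restricted to $[a,b]$. The lag $\mathtt{L}(\mathfrak{B})$ is the smallest integer such that $w_{|[k,k+\mathtt{L}(\mathfrak{B})]}\in\mathfrak{B}_{|[k,k+\mathtt{L}(\mathfrak{B})]}$ for all $k$ implies $w\in\mathfrak{B}$. $\pi_w$ denotes projection of a behavior onto the variable $w$. A quadratic difference form (QdF) of order $K_\Phi$ is $Q_\Phi(w)(k)=\hat{w}_{[k-K_\Phi,k]}^\top\widetilde{\Phi}\hat{w}_{[k-K_\Phi,k]}$ with symmetric $\widetilde{\Phi}$. The rate of change of storage $Q_{\nabla\Psi}(w)(k)=Q_\Psi(w)(k)-Q_\Psi(w)(k-1)$ has coefficient matrix $\nabla\widetilde{\Psi}=\mathrm{diag}(0_{\mathrm{w}},\widetilde{\Psi})-\mathrm{diag}(\widetilde{\Psi},0_{\mathrm{w}})$. Here $\widehat{\Phi}=\mathrm{diag}(0_{k_\Phi\mathrm{w}},\widetilde{\Phi})$,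 $\nabla\widehat{\Psi}=\mathrm{diag}(0_{k_\Psi\mathrm{w}},\nabla\widetilde{\Psi})$, $k_\Phi=L^--K_\Phi$, $k_\Psi=L^--K_\Psi-1$. $\mathfrak{B}_s^\Pi$ is the (virtual) interconnection behavior on $(w,s,V)$ defined by $s=Q_\Phi(w)$, $V=Q_\Psi(w)$. *)

(* Defs.v *)
(* Discrete time axis T = nat (= Z_{>=0}). *)
From HB Require Import structures.
From mathcomp Require Import all_boot all_order all_algebra.
Set Implicit Arguments. Unset Strict Implicit. Unset Printing Implicit Defensive.
Import Order.TTheory GRing.Theory Num.Theory.
Local Open Scope ring_scope.

Section Defs.
Variable R : realFieldType.
Variable wd : nat.

Definition signal := nat -> 'cV[R]_wd.
Definition behavior := signal -> Prop.

(* win w a n = col(w(a), w(a+1), ..., w(a+n-1)) = \hat w_{[a, a+n-1]} *)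
Definition win (w : signal) (a n : nat) : 'cV[R]_(n * wd) :=
  (mxvec (\matrix_(i < n, j < wd) w (a + i)%N j ord0))^T.

Unset Implicit Arguments.
Definition restr (B : behavior) (a n : nat) : 'cV[R]_(n * wd) -> Prop :=
  fun v => exists w, B w /\ win w a n = v.
Set Implicit Arguments.

Definition LTI (B : behavior) : Prop :=
  [/\ B (fun _ => 0),
      (forall w1 w2, B w1 -> B w2 -> B (fun k => w1 k + w2 k)),
      (forall (c : R) w, B w -> B (fun k => c *: w k)) &
      (forall w, B w -> B (fun k => w k.+1))].

Definition complete (B : behavior) (l : nat) : Prop :=
  forall w, (forall k, restr B k l.+1 (win w k l.+1)) -> B w.
Definition is_lag (B : behavior) (l : nat) : Prop :=
  complete B l /\ forall l', (l' < l)%N -> ~ complete B l'.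

Definition qform n (A : 'M[R]_n) (x : 'cV[R]_n) : R := (x^T *m A *m x) 0 0.

(* QdF of order K: Q_Phi(w)(k) = \hat w_{[k-K,k]}^T Phi \hat w_{[k-K,k]}
   (meaningful for k >= K) *)
Definition QdF K (Phi : 'M[R]_(K.+1 * wd)) (w : signal) (k : nat) : R :=
  qform Phi (win w (k - K) K.+1).

(* diag(0, A) of size n (A in the bottom-right corner), assuming p <= n *)
Definition padBR n p (A : 'M[R]_p) : 'M[R]_n :=
  \matrix_(i < n, j < n)
    match (insub (i - (n - p))%N : option 'I_p), (insub (j - (n - p))%N : option 'I_p) with
    | Some i', Some j' => if ((n - p <= i) && (n - p <= j))%N then A i' j' else 0
    | _, _ => 0
    end.

(* diag(A, 0) of size n (A in the top-left corner), assuming p <= n *)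
Definition padTL n p (A : 'M[R]_p) : 'M[R]_n :=
  \matrix_(i < n, j < n)
    match (insub (i : nat) : option 'I_p), (insub (j : nat) : option 'I_p) with
    | Some i', Some j' => A i' j'
    | _, _ => 0
    end.

Definition nablaPsi K (Psi : 'M[R]_(K.+1 * wd)) : 'M[R]_(K.+2 * wd) :=
  padBR (K.+2 * wd) Psi - padTL (K.+2 * wd) Psi.

Definition hatPhi Lm K (Phi : 'M[R]_(K.+1 * wd)) : 'M[R]_(Lm.+1 * wd) :=
  padBR (Lm.+1 * wd) Phi.
Definition hatNablaPsi Lm K (Psi : 'M[R]_(K.+1 * wd)) : 'M[R]_(Lm.+1 * wd) :=
  padBR (Lm.+1 * wd) (nablaPsi Psi).

(* F_l : rows of F corresponding to the segment \hat w_{[k-L^-+l, k+l]} *)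
Definition Fsub L nz Lm (l : nat) (F : 'M[R]_(L * wd, nz)) : 'M[R]_(Lm.+1 * wd, nz) :=
  \matrix_(i < Lm.+1 * wd, j < nz)
    match (insub (l * wd + i)%N : option 'I_(L * wd)) with
    | Some i' => F i' j
    | None => 0
    end.

Definition BsV (s V : nat -> R) : Prop :=
  (forall k, (0 < k)%N -> V k - V k.-1 <= s k) /\ (forall k, 0 <= V k).

(* B_s^Pi : s = Q_Phi(w), V = Q_Psi(w) (wherever the QdFs are defined) *)
Definition BsPi KPhi KPsi (Phi : 'M[R]_(KPhi.+1 * wd)) (Psi : 'M[R]_(KPsi.+1 * wd))
  (w : signal) (s V : nat -> R) : Prop :=
  (forall k, (KPhi <= k)%N -> s k = QdF Phi w k) /\
  (forall k, (KPsi <= k)%N -> V k = QdF Psi w k).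

Definition Bps (B : behavior) KPhi KPsi (Phi : 'M[R]_(KPhi.+1 * wd))
  (Psi : 'M[R]_(KPsi.+1 * wd)) (w : signal) (s V : nat -> R) : Prop :=
  [/\ B w, BsV s V & BsPi Phi Psi w s V].
Definition proj_w (P : signal -> (nat -> R) -> (nat -> R) -> Prop) (w : signal) : Prop :=
  exists s V, P w s V.

End Defs.
Arguments restr {R wd} B a n.

Definition psd (R : realFieldType) n (A : 'M[R]_n) : Prop :=
  A^T = A /\ forall x, 0 <= qform A x.

(* Main.v *)
Require Import Defs.
From HB Require Import structures.
From mathcomp Require Import all_boot all_order all_algebra.
From mathcomp Require Import zify ring lra.
Set Implicit Arguments. Unset Strict Implicit. Unset Printing Implicit Defensive.
Import Order.TTheory GRing.Theory Num.Theory.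
Local Open Scope ring_scope.

Section Aux.
Variable R : realFieldType.

Definition xat n (x : 'cV[R]_n) (i : nat) : R :=
  if (insub i : option 'I_n) is Some i' then x i' 0 else 0.
Definition Mat n (A : 'M[R]_n) (i j : nat) : R :=
  match (insub i : option 'I_n), (insub j : option 'I_n) with
  | Some i', Some j' => A i' j' | _, _ => 0 end.

Lemma xatE n (x : 'cV[R]_n) (i : 'I_n) : xat x i = x i 0.
Proof. by rewrite /xat valK. Qed.
Lemma MatE n (A : 'M[R]_n) (i j : 'I_n) : Mat A i j = A i j.
Proof. by rewrite /Mat !valK. Qed.
Lemma Mat_out n (A : 'M[R]_n) i j : ~~ ((i < n) && (j < n))%N -> Mat A i j = 0.
Proof.
rewrite /Mat; case: (@insubP _ _ 'I_n i) => [i' hi _|_];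
  case: (@insubP _ _ 'I_n j) => [j' hj _|_] //=.
by rewrite hi hj.
Qed.

Lemma xat_inj n (x y : 'cV[R]_n) :
  (forall i, (i < n)%N -> xat x i = xat y i) -> x = y.
Proof.
move=> H; apply/matrixP => i j; rewrite (ord1 j) -!xatE; apply: H; exact: ltn_ord.
Qed.

Lemma qform_nat n (A : 'M[R]_n) x :
  qform A x = \sum_(0 <= i < n) \sum_(0 <= j < n) xat x i * Mat A i j * xat x j.
Proof.
rewrite /qform mxE big_mkord; under [RHS]eq_bigr => i _ do rewrite big_mkord.
rewrite [RHS]exchange_big; apply: eq_bigr => j _; rewrite mxE big_distrl.
by apply: eq_bigr => i _; rewrite !mxE !xatE MatE.
Qed.

Lemma qformB n (A B : 'M[R]_n) x : qform (A - B) x = qform A x - qform B x.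
Proof. by rewrite /qform mulmxBr mulmxBl !mxE. Qed.

Lemma qform_mul n m (F : 'M[R]_(n, m)) (M : 'M_n) z :
  qform (F^T *m M *m F) z = qform M (F *m z).
Proof. by rewrite /qform trmx_mul !mulmxA. Qed.

Lemma sum_shift (G : nat -> R) n p : (p <= n)%N ->
  (forall i, (i < n - p)%N -> G i = 0) ->
  \sum_(0 <= i < n) G i = \sum_(0 <= i < p) G (i + (n - p))%N.
Proof.
move=> pn H0; rewrite (@big_cat_nat _ _ _ (n - p)) ?leq_subr //=.
rewrite big1_seq ?add0r; last by move=> i /andP[_]; rewrite mem_index_iota => /andP[_ /H0].
by rewrite -{1}[(n - p)%N]add0n big_addn subKn.
Qed.

Lemma sum_prefix (G : nat -> R) n p : (p <= n)%N ->
  (forall i, (p <= i)%N -> (i < n)%N -> G i = 0) ->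
  \sum_(0 <= i < n) G i = \sum_(0 <= i < p) G i.
Proof.
move=> pn H0; rewrite (@big_cat_nat _ _ _ p) //=.
rewrite [X in _ + X]big1_seq ?addr0 //.
by move=> i /andP[_]; rewrite mem_index_iota => /andP[h1 h2]; apply: H0.
Qed.

Lemma Mat_padBR n p (A : 'M[R]_p) i j :
  Mat (padBR n A) i j =
  if [&& (i < n)%N, (j < n)%N, (n - p <= i)%N & (n - p <= j)%N]
  then Mat A (i - (n - p)) (j - (n - p)) else 0.
Proof.
rewrite {1}/Mat; case: (@insubP _ _ 'I_n i) => [i' hi <-|/negbTE hi]; last by rewrite hi.
case: (@insubP _ _ 'I_n j) => [j' hj <-|/negbTE hj]; last first.
  by case: (@insub _ _ 'I_n j); rewrite hj /= ?andbF.
rewrite mxE /Mat !ltn_ord /=.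
by case: (n - p <= i')%N; case: (n - p <= j')%N => //=; case: (@insub _ _ 'I_p (i' - _)%N); case: (@insub _ _ 'I_p (j' - _)%N).
Qed.

Lemma Mat_padTL n p (A : 'M[R]_p) i j :
  Mat (padTL n A) i j = if ((i < n) && (j < n))%N then Mat A i j else 0.
Proof.
rewrite {1}/Mat; case: (@insubP _ _ 'I_n i) => [i' hi <-|/negbTE hi]; last by rewrite hi.
case: (@insubP _ _ 'I_n j) => [j' hj <-|/negbTE hj]; last first.
  by case: (@insub _ _ 'I_n j); rewrite hj /= ?andbF.
by rewrite mxE /Mat !ltn_ord /=.
Qed.

Lemma padBR_qform n p (A : 'M[R]_p) (x : 'cV_n) (y : 'cV_p) : (p <= n)%N ->
  (forall i, (i < p)%N -> xat y i = xat x (i + (n - p))) ->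
  qform (padBR n A) x = qform A y.
Proof.
move=> pn Hy; rewrite !qform_nat (sum_shift pn); last first.
  move=> i hi; apply: big1_seq => j _; rewrite Mat_padBR.
  by rewrite [(n - p <= i)%N]leqNgt hi /= !andbF mulr0 mul0r.
apply: eq_big_nat => i /andP[_ ip].
rewrite (sum_shift pn); last first.
  move=> j hj; rewrite Mat_padBR.
  by rewrite [(n - p <= j)%N]leqNgt hj /= !andbF mulr0 mul0r.
apply: eq_big_nat => j /andP[_ jp].
have h1 : (i + (n - p) < n)%N by lia.
have h2 : (j + (n - p) < n)%N by lia.
by rewrite Mat_padBR !Hy // !addnK !leq_addl h1 h2.
Qed.

Lemma padTL_qform n p (A : 'M[R]_p) (x : 'cV_n) (y : 'cV_p) : (p <= n)%N ->
  (forall i, (i < p)%N -> xat y i = xat x i) ->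
  qform (padTL n A) x = qform A y.
Proof.
move=> pn Hy; rewrite !qform_nat (sum_prefix pn); last first.
  move=> i hi1 hi2; apply: big1_seq => j _; rewrite Mat_padTL Mat_out.
    by case: ifP => _; rewrite ?mulr0 ?mul0r.
  by rewrite negb_and -leqNgt hi1.
apply: eq_big_nat => i /andP[_ ip].
rewrite (sum_prefix pn); last first.
  move=> j hj1 hj2; rewrite Mat_padTL Mat_out.
    by case: ifP => _; rewrite ?mulr0 ?mul0r.
  by rewrite negb_and -!leqNgt hj1 orbT.
apply: eq_big_nat => j /andP[_ jp].
have h1 : (i < n)%N by lia.
have h2 : (j < n)%N by lia.
by rewrite Mat_padTL !Hy // h1 h2.
Qed.


Lemma index_pairs (A B : eqType) (s : seq A) (t : seq B) x y :
  x \in s -> y \in t ->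
  index (x, y) [seq (a, b) | a <- s, b <- t] = (index x s * size t + index y t)%N.
Proof.
elim: s => [|a s IH]; first by rewrite in_nil.
move=> xs yt; rewrite allpairs_cons index_cat /=.
have inj : injective (@pair A B a) by move=> ? ? [->].
case: (eqVneq a x) => [<-|nax].
  by rewrite map_f // index_map.
have -> : ((x, y) \in [seq (a, b) | b <- t]) = false.
  by apply/negbTE/mapP => -[b _ [e _]]; rewrite e eqxx in nax.
rewrite size_map IH ?mulSn ?addnA //.
by move: xs; rewrite inE eq_sym (negbTE nax).
Qed.

Lemma val_enum_rank (T : finType) (x : T) : val (enum_rank x) = index x (enum T).
Proof. by rewrite -{2}(nth_enum_rank x x) index_uniq // ?enum_uniq // -cardE ltn_ord. Qed.

Lemma mxvec_index_val m n (i : 'I_m) (j : 'I_n) :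
  val (mxvec_index i j) = (i * n + j)%N.
Proof.
rewrite /mxvec_index /= val_enum_rank.
have -> : enum {: 'I_m * 'I_n} = prod_enum 'I_m 'I_n by rewrite enumT unlock.
by rewrite /prod_enum index_pairs ?mem_enum // !index_enum_ord size_enum_ord.
Qed.

Variable wd : nat.

Lemma win_at (w : signal R wd) a N (i : 'I_N) (j : 'I_wd) :
  xat (win w a N) (i * wd + j) = w (a + i)%N j 0.
Proof. by rewrite -(mxvec_index_val i j) xatE /win mxE mxvecE mxE. Qed.

Lemma win_nat (w : signal R wd) a N i : (i < N * wd)%N ->
  xat (win w a N) i = xat (w (a + i %/ wd)%N) (i %% wd).
Proof.
move=> iN.
have wd0 : (0 < wd)%N by case: wd iN => //; rewrite muln0.
have iN' : (i %/ wd < N)%N by rewrite ltn_divLR.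
have jw : (i %% wd < wd)%N by rewrite ltn_pmod.
by rewrite {1}(divn_eq i wd) (win_at w a (Ordinal iN') (Ordinal jw))
   -(xatE (w _) (Ordinal jw)).
Qed.

Lemma win_shift (w : signal R wd) a N P i : (P <= N)%N -> (i < P * wd)%N ->
  xat (win w (a + (N - P)) P) i = xat (win w a N) (i + (N * wd - P * wd)).
Proof.
move=> PN iP.
have wd0 : (0 < wd)%N by case: wd iP => //; rewrite muln0.
rewrite -mulnBl win_nat // win_nat; last first.
  have -> : (N * wd = P * wd + (N - P) * wd)%N by rewrite -mulnDl subnKC.
  by rewrite ltn_add2r.
rewrite [(i + _)%N]addnC divnMDl // modnMDl; congr (xat (w _) _); set q := (i %/ wd)%N; lia.
Qed.

Lemma win_prefix (w : signal R wd) a N P i : (P <= N)%N -> (i < P * wd)%N ->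
  xat (win w a P) i = xat (win w a N) i.
Proof.
move=> PN iP; rewrite !win_nat //.
by apply: leq_trans iP _; rewrite leq_mul2r PN orbT.
Qed.

Lemma padBR_win K N (A : 'M[R]_(K * wd)) (w : signal R wd) a : (K <= N)%N ->
  qform (padBR (N * wd) A) (win w a N) = qform A (win w (a + (N - K)) K).
Proof.
move=> KN; apply: padBR_qform; first by rewrite leq_mul2r KN orbT.
by move=> i iK; apply: win_shift.
Qed.

Lemma padTL_win K N (A : 'M[R]_(K * wd)) (w : signal R wd) a : (K <= N)%N ->
  qform (padTL (N * wd) A) (win w a N) = qform A (win w a K).
Proof.
move=> KN; apply: padTL_qform; first by rewrite leq_mul2r KN orbT.
by move=> i iK; apply: win_prefix.
Qed.

Lemma padBR_tr n p (A : 'M[R]_p) : (padBR n A)^T = padBR n A^T.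
Proof.
apply/matrixP => i j; rewrite !mxE.
case: (@insub _ _ 'I_p (i - (n - p))%N) => [a|]; case: (@insub _ _ 'I_p (j - (n - p))%N) => [b|] //.
by rewrite andbC mxE.
Qed.

Lemma padTL_tr n p (A : 'M[R]_p) : (padTL n A)^T = padTL n A^T.
Proof.
apply/matrixP => i j; rewrite !mxE.
case: (@insub _ _ 'I_p i) => [a|]; case: (@insub _ _ 'I_p j) => [b|] //.
by rewrite mxE.
Qed.

Lemma Fsub0_at L nz Lm (F : 'M[R]_(L * wd, nz)) z i :
  (Lm.+1 * wd <= L * wd)%N -> (i < Lm.+1 * wd)%N ->
  xat (Fsub Lm 0 F *m z) i = xat (F *m z) i.
Proof.
move=> hL ii; have iL : (i < L * wd)%N by apply: leq_trans hL.
rewrite -[i]/(val (Ordinal ii)) xatE -[i]/(val (Ordinal iL)) xatE !mxE.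
apply: eq_bigr => j _; rewrite mxE /=.
case: (@insubP _ _ 'I_(L * wd) (0 * wd + i)%N) => [k _ hk|]; last by rewrite mul0n add0n iL.
by congr (F _ _ * _); apply: val_inj; rewrite /= hk mul0n add0n.
Qed.

End Aux.

Unset Implicit Arguments.

Theorem proposition9 (R : realFieldType) (wd nz Lm Lp L KPhi KPsi : nat)
  (B : behavior R wd) (F : 'M[R]_(L * wd, nz))
  (Phi : 'M[R]_(KPhi.+1 * wd)) (Psi : 'M[R]_(KPsi.+1 * wd)) :
  LTI B ->
  L = (Lm + Lp + 1)%N ->
  (forall k, (Lm <= k)%N ->
     forall v, restr B (k - Lm) L v <-> exists z : 'cV[R]_nz, v = F *m z) ->
  Phi^T = Phi -> Psi^T = Psi ->
  Lm = maxn KPhi KPsi.+1 ->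
  (exists l, is_lag B l /\ (l < Lm)%N) ->
  psd Psi ->
  (forall l, (l <= Lp)%N -> forall z : 'cV[R]_nz,
     0 <= qform ((Fsub Lm l F)^T *m (hatPhi Lm Phi - hatNablaPsi Lm Psi) *m Fsub Lm l F) z) ->
  (forall w, B w <-> proj_w (Bps B Phi Psi) w) /\
  (Lp = 0%N -> forall e : (L * wd = Lm.+1 * wd)%N,
     (forall l, (l <= Lp)%N -> forall z : 'cV[R]_nz,
        0 <= qform ((Fsub Lm l F)^T *m (hatPhi Lm Phi - hatNablaPsi Lm Psi) *m Fsub Lm l F) z)
     <-> psd ((castmx (e, erefl nz) F)^T *m (hatPhi Lm Phi - hatNablaPsi Lm Psi)
                *m castmx (e, erefl nz) F)).
Proof.
move=> HLTI HL HF HPhi HPsi HLm _ [_ Hpsd] Hineq.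
have LmL : (Lm.+1 <= L)%N by lia.
have key : forall w, B w -> forall k, (Lm <= k)%N ->
    QdF Psi w k - QdF Psi w k.-1 <= QdF Phi w k.
  move=> w Bw k kL.
  have [z Hz] : exists z, win w (k - Lm) L = F *m z.
    by apply/(HF k kL); exists w.
  have Hx : win w (k - Lm) Lm.+1 = Fsub Lm 0 F *m z.
    apply: xat_inj => i ii.
    rewrite Fsub0_at //; last by rewrite leq_mul2r LmL orbT.
    by rewrite -Hz; apply: win_prefix.
  have := Hineq 0%N (leq0n _) z.
  rewrite qform_mul -Hx /hatPhi /hatNablaPsi qformB.
  rewrite padBR_win; last by lia.
  rewrite padBR_win; last by lia.
  rewrite /nablaPsi qformB padBR_win // padTL_win //.
  have -> : (k - Lm + (Lm.+1 - KPhi.+1))%N = (k - KPhi)%N by lia.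
  have -> : (k - Lm + (Lm.+1 - KPsi.+2) + (KPsi.+2 - KPsi.+1))%N = (k - KPsi)%N by lia.
  have -> : (k - Lm + (Lm.+1 - KPsi.+2))%N = (k.-1 - KPsi)%N by lia.
  by rewrite /QdF subr_ge0.
split.
  move=> w; split; last by case=> s [V [Bw _ _]].
  move=> Bw.
  pose q := QdF Psi w; pose p := QdF Phi w.
  pose c := \sum_(i < KPsi.+1) `|p i|.
  have c0 : 0 <= c by apply: sumr_ge0 => i _; exact: normr_ge0.
  have pc : forall k, (k <= KPsi)%N -> - c <= p k.
    move=> k kk; have kk' : (k < KPsi.+1)%N by [].
    have : `|p k| <= c.
      rewrite /c (bigD1 (Ordinal kk')) //= lerDl.
      by apply: sumr_ge0 => i _; exact: normr_ge0.
    by rewrite ler_norml => /andP[].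
  pose V k := if (KPsi <= k)%N then q k else q KPsi + c * (KPsi - k)%:R.
  pose s k := if (KPhi <= k)%N then p k else V k - V k.-1.
  have VE : forall k, (k <= KPsi)%N -> V k = q KPsi + c * (KPsi - k)%:R.
    move=> k kk; rewrite /V; case: ifP => // h.
    have -> : k = KPsi by apply/eqP; rewrite eqn_leq h kk.
    by rewrite subnn mulr0 addr0.
  exists s, V; split => //.
  - split.
    + move=> k k0; rewrite /s; case: ifP => hk; last by rewrite lexx.
      case: (leqP k KPsi) => hk2.
        rewrite VE // VE; last by lia.
        have -> : (KPsi - k.-1 = (KPsi - k) + 1)%N by lia.
        rewrite natrD mulrDr mulr1.
        have := pc k hk2; lra.
      have h1 : (KPsi <= k.-1)%N by lia.
      rewrite /V h1 (ltnW hk2).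
      by apply: key => //; lia.
    + move=> k; rewrite /V; case: ifP => _; first by apply: Hpsd.
      by apply: addr_ge0; [apply: Hpsd | apply: mulr_ge0].
  - by split => k hk; rewrite ?/s ?/V hk.
move=> Lp0 e.
have HF0 : castmx (e, erefl nz) F = Fsub Lm 0 F.
  apply/matrixP => i j; rewrite castmxE mxE /=.
  case: (@insubP _ _ 'I_(L * wd) (0 * wd + i)%N) => [k _ hk|]; last first.
    move=> h; have hi : (val i < L * wd)%N by rewrite e ltn_ord.
    by rewrite mul0n add0n hi in h.
  by congr (F _ _); apply: val_inj; rewrite /= ?hk ?mul0n ?add0n.
have HM : (hatPhi Lm Phi - hatNablaPsi Lm Psi)^T = hatPhi Lm Phi - hatNablaPsi Lm Psi.
  rewrite linearB /= /hatPhi /hatNablaPsi !padBR_tr HPhi /nablaPsi linearB /=.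
  by rewrite padBR_tr padTL_tr HPsi.
rewrite HF0; split.
  move=> H; split; last exact: H 0%N (leq0n _).
  by rewrite !trmx_mul trmxK HM mulmxA.
move=> [_ H] l; rewrite Lp0 leqn0 => /eqP -> z; exact: H.
Qed.
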